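(* Let $(X,S)$ be an $S$-metric space, $r\ge0$, and let $\{\xi_n\}$, $\{\eta_n\}$ be sequences in $X$ such that $S(\xi_n,\xi_n,\eta_n)\to0$ as $n\to\infty$. Then $\{\xi_n\}$ is $r$-statistically convergent to $\xi$ if and only if $\{\eta_n\}$ is $r$-statistically convergent to $\xi$.
   Context: An $S$-metric on a nonempty set $X$ is a function $S:X^3\to[0,\infty)$ such that for all $x,y,z,a\in X$: $S(x,y,z)=0$ if and only if $x=y=z$, and $S(x,y,z)\le S(x,x,a)+S(y,y,a)+S(z,z,a)$. For $B\subset\mathbb N$ the natural density is $\delta(B)=\lim_{n\to\infty}\frac{|\{k\in B:k\le n\}|}{n}$ when the limit exists. For $r\ge0$, $\{\xi_n\}$ is $r$-statistically convergent to $\xi$ if for every $\varepsilon>0$, $\delta(\{n\in\mathbb N: S(\xi_n,\xi_n,\xi)\ge r+\varepsilon\})=0$. *)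

(* Defs.v *)
From Stdlib Require Import Reals Lra ClassicalEpsilon.
Open Scope R_scope.

Definition is_Smetric {X : Type} (S : X -> X -> X -> R) : Prop :=
  (forall x y z, 0 <= S x y z) /\
  (forall x y z, S x y z = 0 <-> (x = y /\ y = z)) /\
  (forall x y z a, S x y z <= S x x a + S y y a + S z z a).

Definition ind (B : nat -> Prop) (k : nat) : R :=
  if excluded_middle_informative (B k) then 1 else 0.

Fixpoint count_upto (B : nat -> Prop) (n : nat) : R :=
  match n with
  | O => 0
  | S m => count_upto B m + ind B (S m)
  end.

Definition has_density (B : nat -> Prop) (d : R) : Prop :=
  Un_cv (fun n => count_upto B n / INR n) d.

(** r-statistical convergence of xi to x (sequence indexed by n >= 1; xi 0 unused) *)
Definition r_stat_conv {X : Type} (S : X -> X -> X -> R) (r : R)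
  (xi : nat -> X) (x : X) : Prop :=
  forall eps : R, 0 < eps ->
    has_density (fun n => r + eps <= S (xi n) (xi n) x) 0.

(* Main.v *)
Require Import Defs.
From Stdlib Require Import Reals Lra Lia Arith ZArith ClassicalEpsilon.
Open Scope R_scope.

Lemma ind_bounds (B : nat -> Prop) (k : nat) : 0 <= Defs.ind B k <= 1.
Proof. unfold Defs.ind; destruct ClassicalEpsilon.excluded_middle_informative; lra. Qed.

Lemma count_nonneg (B : nat -> Prop) (n : nat) : 0 <= count_upto B n.
Proof. induction n; simpl; [lra|]. pose proof (ind_bounds B (S n)); lra. Qed.

Lemma count_le_n (B : nat -> Prop) (n : nat) : count_upto B n <= INR n.
Proof. induction n; simpl count_upto; [simpl; lra|]. rewrite S_INR.
  pose proof (ind_bounds B (S n)); lra. Qed.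

Lemma count_trans (A B : nat -> Prop) (N : nat) :
  (forall k, (N < k)%nat -> A k -> B k) ->
  forall n, count_upto A n <= count_upto B n + INR (Nat.min n N).
Proof.
  intros H n; induction n; simpl count_upto.
  - simpl; lra.
  - destruct (Compare_dec.le_lt_dec (S n) N) as [h|h].
    + replace (Nat.min (S n) N) with (S (Nat.min n N)) by lia.
      rewrite S_INR. pose proof (ind_bounds A (S n)); pose proof (ind_bounds B (S n)); lra.
    + replace (Nat.min (S n) N) with (Nat.min n N) by lia.
      assert (Defs.ind A (S n) <= Defs.ind B (S n)).
      { unfold Defs.ind; destruct ClassicalEpsilon.excluded_middle_informative as [a|a];
        destruct ClassicalEpsilon.excluded_middle_informative as [b|b]; try lra.
        exfalso; apply b; apply H; auto. }
      lra.
Qed.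

Lemma dens_transfer (A B : nat -> Prop) (N : nat) :
  (forall k, (N < k)%nat -> A k -> B k) -> has_density B 0 -> has_density A 0.
Proof.
  intros H HB eps He.
  destruct (HB (eps/2)) as [N1 HN1]; [lra|].
  destruct (archimed (2 * INR N / eps)) as [Hu _].
  assert (Hup : (0 <= up (2 * INR N / eps))%Z).
  { apply le_IZR. assert (0 <= 2 * INR N / eps).
    { apply Rmult_le_pos; [pose proof (pos_INR N); lra | left; apply Rinv_0_lt_compat; lra]. }
    lra. }
  set (N2 := Z.to_nat (up (2 * INR N / eps))).
  assert (HN2 : 2 * INR N / eps < INR N2).
  { unfold N2. rewrite (INR_IZR_INZ (Z.to_nat _)), Z2Nat.id; auto. }
  exists (N1 + N2 + 1)%nat. intros n Hn.
  specialize (HN1 n ltac:(lia)). unfold R_dist in *.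
  rewrite Rminus_0_r in *.
  assert (Hn0 : 0 < INR n) by (apply lt_0_INR; lia).
  pose proof (count_trans A B N H n) as Hc.
  pose proof (count_nonneg A n). pose proof (count_nonneg B n).
  assert (INR (Nat.min n N) <= INR N) by (apply le_INR; lia).
  assert (HNn : INR N2 <= INR n) by (apply le_INR; lia).
  rewrite Rabs_right in *.
  2,3: apply Rle_ge; apply Rmult_le_pos; [auto| left; apply Rinv_0_lt_compat; lra].
  assert (2 * INR N < eps * INR n).
  { apply Rmult_lt_compat_r with (r := eps) in HN2; [|lra].
    unfold Rdiv in HN2. rewrite Rmult_assoc, Rinv_l in HN2 by lra.
    assert (INR N2 * eps <= INR n * eps) by (apply Rmult_le_compat_r; lra). lra. }
  apply Rmult_lt_reg_r with (INR n); auto.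
  unfold Rdiv in *. rewrite Rmult_assoc, Rinv_l by lra.
  apply Rmult_lt_compat_r with (r := INR n) in HN1; auto.
  rewrite Rmult_assoc, Rinv_l in HN1 by lra. lra.
Qed.

Lemma Ssym X (S : X -> X -> X -> R) : is_Smetric S -> forall x y, S x x y = S y y x.
Proof.
  intros [H0 [H1 H2]].
  assert (Z : forall z, S z z z = 0) by (intro z; apply H1; auto).
  assert (forall x y, S x x y <= S y y x).
  { intros x y. pose proof (H2 x x y x). rewrite Z in H. lra. }
  intros x y; pose proof (H x y); pose proof (H y x); lra.
Qed.

Theorem theorem4p8 (X : Type) (S : X -> X -> X -> R) (r : R)
  (xi eta : nat -> X) (x : X) :
  is_Smetric S -> 0 <= r ->
  Un_cv (fun n => S (xi n) (xi n) (eta n)) 0 ->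
  (r_stat_conv S r xi x <-> r_stat_conv S r eta x).
Proof.
  intros HS Hr Hc. pose proof (Ssym X S HS) as Sy.
  destruct HS as [H0 [H1 H2]].
  split; intros Hx eps He;
  destruct (Hc (eps/4)) as [N HN]; try lra;
  apply (dens_transfer _ _ N) with (2 := Hx (eps/2) ltac:(lra));
  intros k Hk Hk'; specialize (HN k ltac:(lia)); unfold R_dist in HN;
  rewrite Rminus_0_r, Rabs_right in HN by (apply Rle_ge; auto).
  - pose proof (H2 (eta k) (eta k) x (xi k)).
    rewrite (Sy (eta k) (xi k)), (Sy x (xi k)) in H. lra.
  - pose proof (H2 (xi k) (xi k) x (eta k)).
    rewrite (Sy x (eta k)) in H. lra.
Qed.
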